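(* Let $X$ be a Polish space and $\varphi\colon X \to [0,\infty]$ a function. Define \[ U(\varphi) = \inf\{ \psi \colon \psi\colon X \to [0,\infty] \text{ upper semi-continuous and } \varphi \leq^* \psi\} \] (pointwise infimum). Then $U(\varphi)$ is upper semi-continuous, $\varphi \leq^* U(\varphi)$, and $U(\varphi)$ is the least upper semi-continuous function with this property. Moreover the following are equivalent: (1) $\varphi \geq^* U(\varphi)$; (2) $\varphi =^* U(\varphi)$; (3) there exists an upper semi-continuous $\psi\colon X \to [0,\infty]$ with $\varphi =^* \psi$; (4) $\varphi$ is Baire measurable as a function.
   Context: For functions $\varphi,\psi$ on $X$, $\varphi \leq^* \psi$ means that the set $\{x \colon \varphi(x) > \psi(x)\}$ is meagre in $X$; $\varphi \geq^* \psi$ means $\psi \leq^* \varphi$; and $\varphi =^* \psi$ means both. A function $\psi$ is upper semi-continuous if $\{x\colon \psi(x)<r\}$ is open for all real $r$. *)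

(* Defs.v *)
From HB Require Import structures.
From mathcomp Require Import all_boot all_order all_algebra.
From mathcomp Require Import all_classical all_reals all_analysis.
Set Implicit Arguments. Unset Strict Implicit. Unset Printing Implicit Defensive.
Import Order.TTheory GRing.Theory Num.Theory.
Local Open Scope classical_set_scope.
Local Open Scope ring_scope.

Section Defs.
Variable R : realType.
Variable X : topologicalType.

Definition metric_for (d : X -> X -> R) : Prop :=
  [/\ (forall x y, 0 <= d x y),
      (forall x y, d x y = 0 <-> x = y),
      (forall x y, d x y = d y x),
      (forall x y z, d x z <= d x y + d y z) &
      (forall A : set X, open A <->
         (forall x, A x -> exists e : R, 0 < e /\ [set y | d x y < e] `<=` A))].

Definition metric_complete (d : X -> X -> R) : Prop :=
  forall u : nat -> X,
    (forall e : R, 0 < e -> exists N : nat, forall m n : nat,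
        (N <= m)%N -> (N <= n)%N -> d (u m) (u n) < e) ->
    exists x : X, u @ \oo --> x.

Definition polish : Prop :=
  (exists D : set X, countable D /\ dense D) /\
  (exists d : X -> X -> R, metric_for d /\ metric_complete d).

Definition nowhere_dense (A : set X) : Prop := (closure A)° = set0.

Definition meagre (A : set X) : Prop :=
  exists F : nat -> set X, (forall n, nowhere_dense (F n)) /\
    A `<=` \bigcup_n F n.

Definition le_star (f g : X -> \bar R) : Prop :=
  meagre [set x | (g x < f x)%E].
Definition ge_star (f g : X -> \bar R) : Prop := le_star g f.
Definition eq_star (f g : X -> \bar R) : Prop := le_star f g /\ ge_star f g.

Definition usc (f : X -> \bar R) : Prop :=
  forall r : R, open [set x | (f x < r%:E)%E].

Definition nonneg (f : X -> \bar R) : Prop := forall x, (0 <= f x)%E.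

Definition Uenv (phi : X -> \bar R) : X -> \bar R :=
  fun x => ereal_inf [set psi x | psi in
     [set psi : X -> \bar R | usc psi /\ nonneg psi /\ le_star phi psi]].

Definition baire_property (A : set X) : Prop :=
  exists U : set X, open U /\ meagre ((A `\` U) `|` (U `\` A)).

Definition baire_measurable (f : X -> \bar R) : Prop :=
  forall B : set (\bar R), open B -> baire_property (f @^-1` B).
End Defs.

(* Main.v *)
Require Import Defs.
From HB Require Import structures.
From mathcomp Require Import all_boot all_order all_algebra.
From mathcomp Require Import all_classical all_reals all_analysis.
From mathcomp Require Import lra.
Import Order.TTheory GRing.Theory Num.Theory.
Local Open Scope classical_set_scope.
Local Open Scope ring_scope.

Lemma nd_set0 (X : topologicalType) : nowhere_dense (set0 : set X).
Proof. by rewrite /nowhere_dense closure0 interior0. Qed.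

Lemma meagre_sub (X : topologicalType) (A B : set X) :
  A `<=` B -> meagre B -> meagre A.
Proof. by move=> AB [F [HF HB]]; exists F; split=> // x /AB /HB. Qed.

Lemma meagre0 (X : topologicalType) : meagre (set0 : set X).
Proof. by exists (fun _ => set0); split=> // _; exact: nd_set0. Qed.

Lemma meagre_bigcup (X : topologicalType) (T : countType) (A : T -> set X) :
  (forall t, meagre (A t)) -> meagre (\bigcup_t A t).
Proof.
move=> HA; have [F HF] := choice HA.
exists (fun k => if (unpickle k : option (T * nat)) is Some p then F p.1 p.2 else set0).
split.
  move=> k; case: (unpickle k) => [p|]; last exact: nd_set0.
  by case: (HF p.1) => + _; apply.
move=> x [t _ Atx]; case: (HF t) => _ /(_ x Atx) [m _ Fm].
by exists (pickle (t, m)) => //; rewrite pickleK.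
Qed.

Lemma meagreU (X : topologicalType) (A B : set X) :
  meagre A -> meagre B -> meagre (A `|` B).
Proof.
move=> mA mB; apply: (@meagre_sub _ _ (\bigcup_(b : bool) (if b then A else B))).
  by move=> x [Ax|Bx]; [exists true|exists false].
by apply: meagre_bigcup => -[].
Qed.

Lemma natinv_lt (R : realType) (e : R) : 0 < e -> exists n : nat, n.+1%:R^-1 < e.
Proof.
move=> e0; exists (Num.Def.trunc e^-1).
rewrite -[e]invrK ltf_pV2 ?posrE ?invr_gt0 ?ltr0n //.
by rewrite invrK; exact: truncnS_gt.
Qed.

Lemma rat_between (R : realType) (a b : R) : a < b -> exists q : rat, a < ratr q < b.
Proof.
move=> ab; have [||] := @dense_rat R [set` `]a, b[].
- by exists ((a + b) / 2); rewrite /= in_itv /= !midf_lt.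
- exact: interval_open.
by move=> y [/= + [q _ qy]]; rewrite -qy in_itv /=; exists q.
Qed.

Definition good (R : realType) (X : topologicalType) (phi : X -> \bar R) :=
  [set psi : X -> \bar R | usc psi /\ nonneg psi /\ le_star phi psi].
Arguments good {R X}.

Lemma U_le (R : realType) (X : topologicalType) (phi psi : X -> \bar R) x :
  good phi psi -> (Uenv phi x <= psi x)%E.
Proof. by move=> g; apply: ereal_inf_lbound; exists psi. Qed.
Arguments U_le {R X phi psi} x.

Lemma U_lt (R : realType) (X : topologicalType) (phi : X -> \bar R) x r :
  (Uenv phi x < r)%E -> exists2 psi, good phi psi & (psi x < r)%E.
Proof. by move=> /ereal_inf_lt [_ [psi g <-] lt]; exists psi. Qed.
Arguments U_lt {R X phi x r}.

Lemma U_usc (R : realType) (X : topologicalType) (phi : X -> \bar R) : usc (Uenv phi).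
Proof.
move=> r.
have -> : [set x | (Uenv phi x < r%:E)%E] =
          \bigcup_(psi in good phi) [set x | (psi x < r%:E)%E].
  apply/seteqP; split=> x /=.
  - by move=> /U_lt [psi g lt]; exists psi.
  - by move=> [psi g /= lt]; exact: le_lt_trans (U_le _ g) lt.
by apply: bigcup_open => psi [+ _]; apply.
Qed.

Lemma U_nonneg (R : realType) (X : topologicalType) (phi : X -> \bar R) : nonneg (Uenv phi).
Proof. by move=> x; apply/ereal_infP => _ [psi [_ [+ _]] <-]; apply. Qed.

Lemma ball_open (R : realType) (X : topologicalType) (d : X -> X -> R) a r :
  metric_for d -> open [set y | d a y < r].
Proof.
case=> d0 dsep dsym dtri dopen; apply/dopen => z /= dz.
exists (r - d a z); split; first by rewrite subr_gt0.
move=> y /= dzy; have := dtri a z y; lra.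
Qed.

Lemma metric_basis (R : realType) (X : topologicalType) (d : X -> X -> R) (D : set X)
  (O : set X) x :
  metric_for d -> dense D -> open O -> O x ->
  exists a n, [/\ D a, d a x < n.+1%:R^-1 & [set y | d a y < n.+1%:R^-1] `<=` O].
Proof.
move=> md dD oO Ox; have md' := md.
case: md' => d0 dsep dsym dtri dopen.
have [e [e0 He]] := (iffLR (dopen O) oO x Ox).
have [n Hn] := @natinv_lt R (e / 2) ltac:(by rewrite divr_gt0).
have [||a [/= xa Da]] := dD [set y | d x y < n.+1%:R^-1].
- by exists x; rewrite /= (iffRL (dsep x x) erefl) invr_gt0 ltr0n.
- exact: ball_open.
exists a, n; split => //; first by rewrite dsym.
move=> y /= ay; apply: He => /=; have := dtri x a y.
move: xa ay Hn; set r := n.+1%:R^-1; lra.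
Qed.

Lemma cst_good (R : realType) (X : topologicalType) (phi : X -> \bar R) :
  good phi (fun _ => +oo%E).
Proof.
split; [|split].
- move=> r; have -> : [set x : X | (+oo < r%:E)%E] = set0 by apply/seteqP; split.
  exact: open0.
- by move=> x; exact: le0y.
- apply: (@meagre_sub X _ set0 _ (@meagre0 X)) => x /=; by rewrite ltNge leey.
Qed.

Lemma U_lestar (R : realType) (X : topologicalType) (phi : X -> \bar R) :
  polish R X -> nonneg phi -> le_star phi (Uenv phi).
Proof.
move=> [[D [cD dD]] [d [md _]]] hphi.
have [f finj] := countable_injP _ cD.
pose B (a : X) (n : nat) := [set y | d a y < n.+1%:R^-1].
have Hc : forall i : (rat * nat * nat)%type, exists psi, good phi psi /\
   (forall a, D a -> f a = i.1.2 ->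
     (exists psi', good phi psi' /\ B a i.2 `<=` [set y | (psi' y < (ratr i.1.1)%:E)%E]) ->
     B a i.2 `<=` [set y | (psi y < (ratr i.1.1)%:E)%E]).
  move=> [[q k] n] /=.
  have [[a [Da [fa [psi' [g' Bpsi']]]]]|N] := pselect (exists a, D a /\ f a = k /\
     exists psi', good phi psi' /\ B a n `<=` [set y | (psi' y < (ratr q)%:E)%E]).
  - exists psi'; split => // a' Da' fa' _.
    have -> : a' = a by apply: finj; rewrite ?inE // fa fa'.
    exact: Bpsi'.
  - exists (fun _ => +oo%E); split; first exact: cst_good.
    move=> a Da fa H; exfalso; apply: N; exists a; split => //; split => //.
have [psi_ Hpsi] := choice Hc.
apply: (@meagre_sub X _ (\bigcup_i [set x | (psi_ i x < phi x)%E])).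
  move=> x /= Ux.
  have U0 := @U_nonneg R X phi x.
  have [u Uu] : exists u : R, Uenv phi x = u%:E.
    move: Ux U0; case: (Uenv phi x) => [u _ _|//|//]; first by exists u.
    by rewrite ltNge leey.
  have [b [ub bphi]] : exists b : R, u < b /\ (b%:E <= phi x)%E.
    move: Ux (hphi x); rewrite Uu; case: (phi x) => [p|_ _|//].
    + by rewrite lte_fin => up _; exists p; split.
    + by exists (u + 1); split; [rewrite ltrDl|exact: leey].
  have [q /andP [uq qb]] := @rat_between R _ _ ub.
  have [psi' g' psi'x] : exists2 psi', good phi psi' & (psi' x < (ratr q)%:E)%E.
    by apply: U_lt; rewrite Uu lte_fin.
  have oO : open [set y | (psi' y < (ratr q)%:E)%E] by case: g' => + _; apply.
  have [a [n [Da ax BO]]] := @metric_basis R X d D _ x md dD oO psi'x.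
  exists (q, f a, n) => //=.
  have := (Hpsi (q, f a, n)).2 a Da erefl (ex_intro _ psi' (conj g' BO)) x ax.
  move=> /= lt; apply: (lt_le_trans lt); apply: le_trans bphi.
  by rewrite lee_fin ltW.
apply: meagre_bigcup => i; by case: (Hpsi i) => -[_ [_ +]] _.
Qed.

Definition sdiff (X : Type) (A B : set X) := (A `\` B) `|` (B `\` A).

Lemma bp_open (X : topologicalType) (U : set X) : open U -> baire_property U.
Proof.
move=> oU; exists U; split => //; apply: (@meagre_sub X _ set0 _ (@meagre0 X)).
by move=> x [[]|[]].
Qed.

Lemma bp_closed (X : topologicalType) (C : set X) : closed C -> baire_property C.
Proof.
move=> cC; exists C°; split; first exact: open_interior.
pose S := C `&` ~` C°.
apply: (@meagre_sub X _ S).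
  by move=> x [[Cx nx]|[/interior_subset Cx nCx]].
exists (fun _ => S); split; last by move=> x Sx; exists 0%N.
move=> _; rewrite /nowhere_dense.
have cS : closed S by apply: closedI => //; apply: open_closedC; exact: open_interior.
rewrite -(iffLR (closure_id S) cS).
apply/seteqP; split => // x Sx.
have /interior_subset [_ nCx] := Sx.
by apply: nCx; apply: (@interiorS _ S C) => // y [].
Qed.

Lemma bp_bigcup (X : topologicalType) (T : countType) (A : T -> set X) :
  (forall t, baire_property (A t)) -> baire_property (\bigcup_t A t).
Proof.
move=> HA; have [U HU] := choice HA.
exists (\bigcup_t U t); split.
  by apply: bigcup_open => t _; case: (HU t).
apply: (@meagre_sub X _ (\bigcup_t ((A t `\` U t) `|` (U t `\` A t)))).
  move=> x [[[t _ At] nU]|[[t _ Ut] nA]].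
  - by exists t => //; left; split => // Ux; apply: nU; exists t.
  - by exists t => //; right; split => // Ax; apply: nA; exists t.
by apply: meagre_bigcup => t; case: (HU t).
Qed.

Lemma bpU (X : topologicalType) (A B : set X) :
  baire_property A -> baire_property B -> baire_property (A `|` B).
Proof.
move=> bA bB.
have -> : A `|` B = \bigcup_(b : bool) (if b then A else B).
  apply/seteqP; split => x.
  - by case=> ?; [exists true|exists false].
  - by case=> -[] _ ?; [left|right].
by apply: bp_bigcup => -[].
Qed.

Lemma bp_setIo (X : topologicalType) (A V : set X) :
  open V -> baire_property A -> baire_property (A `&` V).
Proof.
move=> oV [U [oU mU]]; exists (U `&` V); split; first exact: openI.
apply: meagre_sub mU => x [[[Ax Vx] nUV]|[[Ux Vx] nAV]].
- by left; split => // Ux; apply: nUV.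
- by right; split => // Ax; apply: nAV.
Qed.

Lemma bp_change (X : topologicalType) (A A' : set X) :
  baire_property A -> meagre ((A `\` A') `|` (A' `\` A)) -> baire_property A'.
Proof.
move=> [U [oU mU]] mA; exists U; split => //.
apply: (@meagre_sub X _ (((A `\` U) `|` (U `\` A)) `|` ((A `\` A') `|` (A' `\` A)))); last exact: meagreU.
move=> x; have [Ax|nAx] := pselect (A x).
- by move=> [[A'x nUx]|[Ux nA'x]]; [left; left|right; left].
- by move=> [[A'x nUx]|[Ux nA'x]]; [right; right|left; right].
Qed.

Lemma bp_gt (R : realType) (X : topologicalType) (psi : X -> \bar R) (q : R) :
  usc psi -> baire_property [set x | (q%:E < psi x)%E].
Proof.
move=> upsi.
have -> : [set x | (q%:E < psi x)%E] =
    \bigcup_(n : nat) ~` [set x | (psi x < (q + n.+1%:R^-1)%:E)%E].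
  apply/seteqP; split => x /=.
  - move=> qx; case Ex: (psi x) qx => [p| |] //=.
    + rewrite lte_fin => qp; have [n Hn] := @natinv_lt R (p - q) ltac:(by rewrite subr_gt0).
      exists n => //=; rewrite Ex lte_fin; apply/negP; rewrite -leNgt.
      move: Hn; set r := n.+1%:R^-1; move=> Hn; lra.
    + by move=> _; exists 0%N => //=; rewrite Ex ltNge leey.
  - move=> [n _ /= /negP]; rewrite -leNgt => H; apply: lt_le_trans H.
    by rewrite lte_fin ltrDl invr_gt0 ltr0n.
apply: bp_bigcup => n; apply: bp_closed; apply: open_closedC; exact: upsi.
Qed.

Lemma usc_bm (R : realType) (X : topologicalType) (psi : X -> \bar R) (B : set (\bar R)) :
  usc psi -> open B -> baire_property (psi @^-1` B).
Proof.
move=> upsi oB.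
pose F1 (i : rat * rat) := if pselect ([set y : \bar R | ((ratr i.1)%:E < y)%E /\ (y < (ratr i.2)%:E)%E] `<=` B)
   then [set x | ((ratr i.1)%:E < psi x)%E] `&` [set x | (psi x < (ratr i.2)%:E)%E] else set0.
pose F2 (q : rat) := if pselect ([set y : \bar R | ((ratr q)%:E < y)%E] `<=` B)
   then [set x | ((ratr q)%:E < psi x)%E] else set0.
pose F3 (q : rat) := if pselect ([set y : \bar R | (y < (ratr q)%:E)%E] `<=` B)
   then [set x | (psi x < (ratr q)%:E)%E] else set0.
have -> : psi @^-1` B = (\bigcup_i F1 i) `|` ((\bigcup_q F2 q) `|` (\bigcup_q F3 q)).
  apply/seteqP; split => x /=.
  - move=> Bx; have nb : nbhs (psi x) B by apply: open_nbhs_nbhs.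
    case Ex: (psi x) Bx nb => [p| |] Bx nb.
    + have := iffLR (nbhs_EFin _ _) nb.
      move=> /nbhs_ballP [e /= e0 He].
      have [q1 /andP [q1a q1b]] := @rat_between R (p - e) p ltac:(by rewrite ltrBlDr ltrDl).
      have [q2 /andP [q2a q2b]] := @rat_between R p (p + e) ltac:(by rewrite ltrDl).
      left; exists (q1, q2) => //; rewrite /F1 /=.
      destruct (pselect _) as [HH|N]; first by rewrite /= Ex !lte_fin.
      exfalso; apply: N => -[r| |] /= [] //; rewrite !lte_fin => r1 r2.
      apply: He; rewrite /= ltr_distlC.
      by apply/andP; split; [exact: lt_trans r1|exact: lt_trans q2b].
    + case: nb => M [Mr HM].
      have [q /andP [q1 _]] := @rat_between R M (M + 1) ltac:(by rewrite ltrDl).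
      right; left; exists q => //; rewrite /F2.
      destruct (pselect _) as [HH|N]; first by rewrite /= Ex ltry.
      by exfalso; apply: N => y /= qy; apply: HM; apply: lt_trans qy; rewrite lte_fin.
    + case: nb => M [Mr HM].
      have [q /andP [_ q1]] := @rat_between R (M - 1) M ltac:(by rewrite ltrBlDr ltrDl).
      right; right; exists q => //; rewrite /F3.
      destruct (pselect _) as [HH|N]; first by rewrite /= Ex ltNyr.
      by exfalso; apply: N => y /= qy; apply: HM; apply: lt_trans qy _; rewrite lte_fin.
  - case=> [[i _]|[[q _]|[q _]]]; rewrite /F1 /F2 /F3; destruct (pselect _) as [H|H] => //.
    + by move=> /= Hx; exact: (H _ Hx).
    + by move=> /= Hx; exact: (H _ Hx).
    + by move=> /= Hx; exact: (H _ Hx).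
apply: bpU; last apply: bpU; apply: bp_bigcup.
- move=> i; rewrite /F1; destruct (pselect _); last exact/bp_open/open0.
  by apply: bp_setIo; [exact: upsi|exact: bp_gt].
- move=> q; rewrite /F2; destruct (pselect _); last exact/bp_open/open0.
  exact: bp_gt.
- move=> q; rewrite /F3; destruct (pselect _); last exact/bp_open/open0.
  exact/bp_open/upsi.
Qed.

Lemma eq_bm (R : realType) (X : topologicalType) (phi psi : X -> \bar R) :
  usc psi -> eq_star phi psi -> baire_measurable phi.
Proof.
move=> upsi [m1 m2] B oB.
apply: (@bp_change X _ _ (@usc_bm R X psi B upsi oB)).
apply: (@meagre_sub X _ ([set x | (psi x < phi x)%E] `|` [set x | (phi x < psi x)%E])); last exact: meagreU.
move=> x /=; have [h|h|h] := ltgtP (psi x) (phi x).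
- by move=> _; left.
- by move=> _; right.
- by rewrite h; move=> [[? ?]|[? ?]].
Qed.

Lemma bm_key (R : realType) (X : topologicalType) (phi : X -> \bar R) (q : rat) :
  polish R X -> nonneg phi -> baire_measurable phi -> 0 <= ratr q :> R ->
  meagre [set x | (phi x < (ratr q)%:E)%E /\ ((ratr q)%:E < Uenv phi x)%E].
Proof.
move=> hX hphi bm q0.
set A := phi @^-1` [set y | (y < (ratr q)%:E)%E].
have [V [oV mV]] := bm [set y | (y < (ratr q)%:E)%E] (@open_ereal_lt_ereal R ((ratr q)%:E)).
rewrite -/A in mV.
pose b x : \bar R := if pselect (V x) then (ratr q)%:E else +oo%E.
pose psi x := Order.min (Uenv phi x) (b x).
have gpsi : good phi psi.
  split; [|split].
  - move=> r.
    have -> : [set x | (psi x < r%:E)%E] =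
        [set x | (Uenv phi x < r%:E)%E] `|` [set x | V x /\ ((ratr q)%:E < r%:E)%E].
      apply/seteqP; split => x; rewrite /= /psi gt_min /b; destruct (pselect (V x)) as [Vx|nVx].
      + by move=> /orP [h|h]; [left|right].
      + by move=> /orP [h|]; [left|rewrite ltNge leey].
      + by move=> [h|[_ h]]; apply/orP; [left|right].
      + by move=> [h|[h _]]; [apply/orP; left|].
    apply: openU; first exact: U_usc.
    have [qr|nqr] := boolP ((ratr q)%:E < r%:E)%E.
    + apply: (@eq_rect _ V open oV); apply/seteqP; split=> x //=; by [case|].
    + apply: (@eq_rect _ set0 open open0); apply/seteqP; split=> x //=; by case.
  - move=> x; rewrite /psi le_min U_nonneg /b /=.
    by destruct (pselect (V x)); rewrite ?lee_fin ?leey.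
  - apply: (@meagre_sub X _ ([set x | (Uenv phi x < phi x)%E] `|` ((A `\` V) `|` (V `\` A)))).
      move=> x; rewrite /= /psi gt_min /b; destruct (pselect (V x)) as [Vx|nVx].
      + move=> /orP [h|h]; first by left.
        by right; right; split => //; rewrite /A /= ltNge (ltW h).
      + by move=> /orP [h|]; [left|rewrite ltNge leey].
    by apply: meagreU => //; exact: U_lestar.
apply: (@meagre_sub X _ ((A `\` V) `|` (V `\` A))) => // x /= [h1 h2].
left; split => // Vx.
have := U_le x gpsi; rewrite /psi /b; destruct (pselect (V x)) as [HV|HV]; last by [].
move=> /= h; move: h; rewrite le_min => /andP [_ h].
by move: h2; rewrite ltNge h.
Qed.

Lemma bm_ge (R : realType) (X : topologicalType) (phi : X -> \bar R) :
  polish R X -> nonneg phi -> baire_measurable phi -> ge_star phi (Uenv phi).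
Proof.
move=> hX hphi bm.
apply: (@meagre_sub X _ (\bigcup_(q : rat) [set x | 0 <= ratr q :> R /\
     (phi x < (ratr q)%:E)%E /\ ((ratr q)%:E < Uenv phi x)%E])).
  move=> x /= lt.
  have [p Ep] : exists p : R, phi x = p%:E.
    move: lt (hphi x); case: (phi x) => [p _ _|//|//]; first by exists p.
    by rewrite ltNge leey.
  have p0 : 0 <= p by rewrite -lee_fin -Ep.
  have [c [pc cU]] : exists c : R, p < c /\ (c%:E <= Uenv phi x)%E.
    move: lt; rewrite Ep; case: (Uenv phi x) => [u| |//].
    + by rewrite lte_fin => pu; exists u; split.
    + by move=> _; exists (p + 1); split; [rewrite ltrDl|exact: leey].
  have [q /andP [pq qc]] := @rat_between R _ _ pc.
  exists q => //; split; first exact: le_trans (ltW pq).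
  by rewrite Ep !lte_fin pq; split => //; apply: lt_le_trans cU; rewrite lte_fin.
apply: meagre_bigcup => q.
have [q0|nq0] := boolP (0 <= ratr q :> R).
- apply: (@meagre_sub X _ _ _ (@bm_key R X phi q hX hphi bm q0)) => x [_ h]; exact: h.
- apply: (@meagre_sub X _ set0 _ (@meagre0 X)) => x [] //.
Qed.

Theorem lemma3p2 (R : realType) (X : topologicalType)
  (hX : polish R X) (phi : X -> \bar R) (hphi : nonneg phi) :
  [/\ usc (Uenv phi),
      nonneg (Uenv phi),
      le_star phi (Uenv phi),
      (forall psi : X -> \bar R, usc psi -> nonneg psi -> le_star phi psi ->
         forall x, (Uenv phi x <= psi x)%E) &
      [/\ ge_star phi (Uenv phi) <-> eq_star phi (Uenv phi),
          eq_star phi (Uenv phi) <->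
            (exists psi : X -> \bar R, [/\ usc psi, nonneg psi & eq_star phi psi]) &
          (exists psi : X -> \bar R, [/\ usc psi, nonneg psi & eq_star phi psi]) <->
            baire_measurable phi]].
Proof.
have le := @U_lestar R X phi hX hphi.
split.
- exact: U_usc.
- exact: U_nonneg.
- exact: le.
- by move=> psi u n l x; apply: U_le; split.
split.
- by split => [h|[]//]; split.
- split => [h|[psi [u n [l g]]]].
  + by exists (Uenv phi); split => //; [exact: U_usc|exact: U_nonneg].
  + split => //; apply: (@meagre_sub X _ [set x | (phi x < psi x)%E]) => // x /= h.
    apply: lt_le_trans h _; apply: U_le; split => //.
- split => [[psi [u n e]]|bm]; first exact: eq_bm u e.
  exists (Uenv phi); split; [exact: U_usc|exact: U_nonneg|split => //].
  exact: bm_ge.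
Qed.
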